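(* Let $f\colon\mathbb{R}^n\to\mathbb{R}$ be differentiable, $\mu$-strongly convex, with $\|\nabla f(x)-\nabla f(y)\|\le L\|x-y\|$ for all $x,y$ (Euclidean norm), where $0<\mu<L$, and let $x_\star$ be its minimizer, $f_\star=f(x_\star)$. Let $\kappa=L/\mu$ and $\gamma=\frac{\sqrt{8\kappa+1}+3}{2\kappa-2}$. Given $x_0$, let $y_0=x_0$ and for $k=0,1,\dots$ \[ y_{k+1}=x_k-\tfrac1L\nabla f(x_k),\qquad x_{k+1}=y_{k+1}+\frac{1}{2\gamma+1}(y_{k+1}-y_k)+\frac{1}{2\gamma+1}(y_{k+1}-x_k). \] Then for $k=1,2,\dots$, \[ f(x_k)-f_\star\le\frac{(1+\gamma)^{-k+2}}{2\gamma}\cdot\frac{\mu+2L}{2}\,\|x_0-x_\star\|^2. \]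
   Context: A function $f$ is $\mu$-strongly convex if $f(x)-\frac{\mu}{2}\|x\|^2$ is convex. *)

(* Defs.v *)
From HB Require Import structures.
From mathcomp Require Import all_boot all_order all_algebra.
From mathcomp Require Import all_classical all_reals all_analysis.
Set Implicit Arguments. Unset Strict Implicit. Unset Printing Implicit Defensive.
Import Order.TTheory GRing.Theory Num.Theory.
Import numFieldNormedType.Exports.
Local Open Scope ring_scope.

(* Euclidean inner product and norm on R^n (the default matrix norm in
   MathComp-Analysis is the sup norm, so we define the Euclidean one). *)
Definition edot (R : realType) (n : nat) (u v : 'rV[R]_n) : R :=
  \sum_(i < n) u ord0 i * v ord0 i.
Definition enorm (R : realType) (n : nat) (u : 'rV[R]_n) : R :=
  Num.sqrt (edot u u).

Definition grad (R : realType) (n : nat) (f : 'rV[R]_n -> R) (x : 'rV[R]_n)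
  : 'rV[R]_n := \row_j ('D_(delta_mx ord0 j) f x).

Definition convex_fun (R : realType) (n : nat) (g : 'rV[R]_n -> R) : Prop :=
  forall (x y : 'rV[R]_n) (t : R), 0 <= t -> t <= 1 ->
    g (t *: x + (1 - t) *: y) <= t * g x + (1 - t) * g y.

Definition strongly_convex (R : realType) (n : nat) (mu : R)
  (f : 'rV[R]_n -> R) : Prop :=
  convex_fun (fun x => f x - mu / 2 * enorm x ^+ 2).

(* Main.v *)
Require Import Defs.
From HB Require Import structures.
From mathcomp Require Import all_boot all_order all_algebra.
From mathcomp Require Import all_classical all_reals all_analysis.
From mathcomp Require Import lra ring.
Import Order.TTheory GRing.Theory Num.Theory.
Import numFieldNormedType.Exports.
Local Open Scope ring_scope.
Set Implicit Arguments. Unset Strict Implicit.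

Section Edot.
Variables (R : realType) (n : nat).
Implicit Types u v w : 'rV[R]_n.

Lemma edotC u v : edot u v = edot v u.
Proof. by rewrite /edot; apply: eq_bigr => i _; rewrite mulrC. Qed.
Lemma edotDl u v w : edot (u + v) w = edot u w + edot v w.
Proof. by rewrite /edot -big_split; apply: eq_bigr => i _; rewrite !mxE mulrDl. Qed.
Lemma edotDr u v w : edot w (u + v) = edot w u + edot w v.
Proof. by rewrite edotC edotDl !(edotC w). Qed.
Lemma edotZl (a : R) u v : edot (a *: u) v = a * edot u v.
Proof. by rewrite /edot mulr_sumr; apply: eq_bigr => i _; rewrite !mxE mulrA. Qed.
Lemma edotZr (a : R) u v : edot u (a *: v) = a * edot u v.
Proof. by rewrite edotC edotZl edotC. Qed.
Lemma edotNl u v : edot (- u) v = - edot u v.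
Proof. by rewrite -scaleN1r edotZl mulN1r. Qed.
Lemma edotNr u v : edot u (- v) = - edot u v.
Proof. by rewrite edotC edotNl edotC. Qed.
Lemma edot_ge0 u : 0 <= edot u u.
Proof. by rewrite /edot; apply: sumr_ge0 => i _; rewrite -expr2 sqr_ge0. Qed.
Lemma enorm_sq u : enorm u ^+ 2 = edot u u.
Proof. by rewrite /enorm sqr_sqrtr // edot_ge0. Qed.
Lemma enorm_ge0 u : 0 <= enorm u.
Proof. exact: sqrtr_ge0. Qed.
Lemma edot0 u : edot u u = 0 -> u = 0.
Proof.
move=> h; apply/rowP => j; rewrite mxE.
have H : forall i : 'I_n, true -> 0 <= u 0 i * u 0 i by move=> i _; rewrite -expr2 sqr_ge0.
have := @psumr_eq0P _ _ xpredT (fun i => u 0 i * u 0 i) H h j isT.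
by move/eqP; rewrite mulf_eq0 orbb => /eqP.
Qed.
End Edot.

Section Deriv.
Variables (R : realType) (n : nat) (f : 'rV[R]_n -> R).
Hypothesis df : forall z, differentiable f z.

Lemma D_grad (p d : 'rV[R]_n) : 'D_d f p = edot (grad f p) d.
Proof.
rewrite deriveE // {1}(row_sum_delta d) linear_sum /edot.
apply: eq_bigr => j _; rewrite linearZ /= mxE -deriveE // mulrC.
by [].
Qed.

Lemma line_derive (a d : 'rV[R]_n) (t : R) :
  is_derive t 1 (fun s : R => f (a + s *: d)) (edot (grad f (a + t *: d)) d).
Proof.
have H : (fun h : R => h^-1 *: (((fun s : R => f (a + s *: d)) \o shift t) (h *: 1)
                - f (a + t *: d))) =
         (fun h : R => h^-1 *: ((f \o shift (a + t *: d)) (h *: d) - f (a + t *: d))).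
  apply/funext => h /=; congr (_ *: (f _ - _)).
  by rewrite [h%:A]mulr1 scalerDl addrCA addrA.
have dv : derivable f (a + t *: d) d by apply: diff_derivable.
split; first by rewrite /derivable H.
by rewrite /derive H -D_grad.
Qed.
End Deriv.

Lemma le_of_eq (R : realType) (x y : R) : x = y -> x <= y.
Proof. by move=> ->. Qed.

Lemma sq_le (R : realType) (x y : R) : 0 <= x -> x <= y -> x ^+ 2 <= y ^+ 2.
Proof. move=> h0 h1; nra. Qed.

Section Descent.
Variables (R : realType) (n : nat) (f : 'rV[R]_n -> R) (L : R).
Hypothesis df : forall z, differentiable f z.
Hypothesis HL : forall u v, enorm (grad f u - grad f v) <= L * enorm (u - v).
Hypothesis L0 : 0 < L.

Lemma lip_sq u v : edot (grad f u - grad f v) (grad f u - grad f v) <= L ^+ 2 * edot (u - v) (u - v).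
Proof.
rewrite -!enorm_sq -exprMn; apply: sq_le; [exact: enorm_ge0 | exact: HL].
Qed.

Lemma descent a b :
  f b <= f a + edot (grad f a) (b - a) + L / 2 * edot (b - a) (b - a).
Proof.
set d := b - a; set C := edot (grad f a) d; set D := edot d d.
pose psi := fun s : R => f (a + s *: d) - C * s - (L / 2 * D) * s ^+ 2.
have hpsi : forall s : R, is_derive s 1 psi
    (edot (grad f (a + s *: d)) d - C - (L / 2 * D) * (2 * s)).
  move=> s.
  have -> : psi = (fun s : R => f (a + s *: d)) - C \*: (@id R) - (L / 2 * D) \*: ((@id R) ^+ 2).
    by apply/funext => r /=; rewrite /psi /GRing.scale /=.
  have := line_derive df a d s => hl.
  apply: is_derive_eq.
  by rewrite /GRing.scale /= mulr1 expr1 mulr1.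
have [c c01 hc] := @MVT R psi _ 0 1 ltr01 (fun x _ => hpsi x)
  (derivable_within_continuous (fun x _ => @ex_derive _ _ _ _ _ _ _ (hpsi x))).
move: c01; rewrite in_itv /= => /andP [c0 c1].
have e1 : psi 1 = f b - C - L / 2 * D.
  rewrite /psi scale1r.
  have -> : a + d = b by rewrite /d addrC subrK.
  by rewrite expr1n !mulr1.
have e0 : psi 0 = f a.
  by rewrite /psi scale0r addr0 mulr0 subr0 expr0n /= mulr0 subr0.
set u := grad f (a + c *: d) - grad f a.
have hu : edot u u <= (L * c) ^+ 2 * D.
  have := lip_sq (a + c *: d) a.
  rewrite addrAC subrr add0r edotZl edotZr -/D -/u => h; apply: (le_trans h); apply: le_of_eq; ring.
have hud : edot u d = edot (grad f (a + c *: d)) d - C.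
  by rewrite /u edotDl edotNl.
clearbody u.
have hq := edot_ge0 (u - (L * c) *: d).
rewrite edotDl !edotDr !edotNl !edotNr !edotZl !edotZr -/D (edotC d u) in hq.
have hs : 0 < L * c by apply: mulr_gt0.
have hD := edot_ge0 d.
have key : edot u d <= L * c * D.
  move: hq hu hs; set s := L * c; set ud := edot u d; set uu := edot u u => hq hu hs.
  nra.
have hdpsi : edot (grad f (a + c *: d)) d - C - L / 2 * D * (2 * c) <= 0.
  rewrite -hud; nra.
rewrite e1 e0 subr0 mulr1 in hc.
move: hdpsi; rewrite -hc; lra.
Qed.


Lemma edot_young (u v : 'rV[R]_n) (s : R) : 0 < s ->
  edot u v <= (edot u u / s + s * edot v v) / 2.
Proof.
move=> s0; have hq := edot_ge0 (u - s *: v).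
rewrite edotDl !edotDr !edotNl !edotNr !edotZl !edotZr (edotC v u) in hq.
have hs : s * ((edot u u / s + s * edot v v) / 2 - edot u v) =
   (edot u u - s * edot u v + (- (s * edot u v) - - (s * (s * edot v v)))) / 2.
  by field; rewrite gt_eqF.
have : 0 <= s * ((edot u u / s + s * edot v v) / 2 - edot u v) by rewrite hs; lra.
by rewrite pmulr_rge0 // subr_ge0.
Qed.

Lemma lower_line a d t : 0 < t ->
  f a + t * edot (grad f a) d - (3 * L / 2) * (t ^+ 2 * edot d d) <= f (a + t *: d).
Proof.
move=> t0.
have h1 := descent (a + t *: d) a.
have e : a - (a + t *: d) = - (t *: d) by rewrite opprD addNKr.
rewrite e !edotNl !edotNr !edotZr !edotZl opprK in h1.
set u := grad f (a + t *: d) - grad f a.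
have hu : edot u u <= L ^+ 2 * (t ^+ 2 * edot d d).
  have := lip_sq (a + t *: d) a.
  rewrite addrAC subrr add0r edotZl edotZr => h; apply: (le_trans h); apply: le_of_eq; ring.
have hy := edot_young (- u) (t *: d) L0.
rewrite !edotNl !edotNr opprK !edotZl !edotZr in hy.
have hud : edot u d = edot (grad f (a + t *: d)) d - edot (grad f a) d.
  by rewrite /u edotDl edotNl.
clearbody u.
have hU : edot u u / L <= L * (t ^+ 2 * edot d d).
  rewrite ler_pdivrMr //; apply: (le_trans hu); apply: le_of_eq; ring.
rewrite hud in hy.
have eX : t * (t * edot d d) = t ^+ 2 * edot d d by rewrite expr2 mulrA.
rewrite eX in h1 hy.
move: hy h1 hU.
set X := t ^+ 2 * edot d d; set U := edot u u / L.
set G1 := edot (grad f (a + t *: d)) d; set G0 := edot (grad f a) d.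
move=> hy h1 hU.
have hLX : L * X = L * X by [].
nra.
Qed.

End Descent.

Lemma small_t (R : realType) (D0 E K : R) : 0 <= K ->
  (forall t, 0 < t -> t <= 1 -> D0 - K * t <= E) -> D0 <= E.
Proof.
move=> K0 h; rewrite leNgt; apply/negP => hlt.
set e := D0 - E.
have e0 : 0 < e by rewrite /e subr_gt0.
have ht := h (e / (e + K)).
have p : 0 < e + K by lra.
have t0 : 0 < e / (e + K) by apply: divr_gt0.
have t1 : e / (e + K) <= 1 by rewrite ler_pdivrMr // mul1r; lra.
have := ht t0 t1.
have : K * (e / (e + K)) < e.
  rewrite mulrA ltr_pdivrMr //; nra.
rewrite /e; lra.
Qed.


Lemma le_by (R : realType) (l r s : R) : 0 <= s -> r - l = s -> l <= r.
Proof. by move=> h e; rewrite -subr_ge0 e. Qed.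

Section LC.
Variables (R : realType) (n : nat).
Definition lc4 (c1 c2 c3 c4 : R) (v1 v2 v3 v4 : 'rV[R]_n) :=
  c1 *: v1 + c2 *: v2 + c3 *: v3 + c4 *: v4.
Lemma edot_lc4 c1 c2 c3 c4 d1 d2 d3 d4 v1 v2 v3 v4 :
  edot (lc4 c1 c2 c3 c4 v1 v2 v3 v4) (lc4 d1 d2 d3 d4 v1 v2 v3 v4) =
  c1 * d1 * edot v1 v1 + (c1 * d2 + c2 * d1) * edot v1 v2 + (c1 * d3 + c3 * d1) * edot v1 v3
  + (c1 * d4 + c4 * d1) * edot v1 v4 + c2 * d2 * edot v2 v2 + (c2 * d3 + c3 * d2) * edot v2 v3
  + (c2 * d4 + c4 * d2) * edot v2 v4 + c3 * d3 * edot v3 v3 + (c3 * d4 + c4 * d3) * edot v3 v4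
  + c4 * d4 * edot v4 v4.
Proof.
rewrite /lc4 !edotDl !edotDr !edotZl !edotZr (edotC v2 v1) (edotC v3 v1) (edotC v4 v1)
  (edotC v3 v2) (edotC v4 v2) (edotC v4 v3).
ring.
Qed.
End LC.

Lemma edot_lc4E (R : realType) (n : nat) (X Y : 'rV[R]_n) c1 c2 c3 c4 d1 d2 d3 d4 v1 v2 v3 v4 :
  X = lc4 c1 c2 c3 c4 v1 v2 v3 v4 -> Y = lc4 d1 d2 d3 d4 v1 v2 v3 v4 ->
  edot X Y =
  c1 * d1 * edot v1 v1 + (c1 * d2 + c2 * d1) * edot v1 v2 + (c1 * d3 + c3 * d1) * edot v1 v3
  + (c1 * d4 + c4 * d1) * edot v1 v4 + c2 * d2 * edot v2 v2 + (c2 * d3 + c3 * d2) * edot v2 v3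
  + (c2 * d4 + c4 * d2) * edot v2 v4 + c3 * d3 * edot v3 v3 + (c3 * d4 + c4 * d3) * edot v3 v4
  + c4 * d4 * edot v4 v4.
Proof. by move=> -> ->; apply: edot_lc4. Qed.

Ltac vec_eq := apply/rowP => j; rewrite /lc4 !mxE /=.

Section Interp.
Variables (R : realType) (n : nat) (f : 'rV[R]_n -> R) (L mu : R).
Hypothesis df : forall z, differentiable f z.
Hypothesis HL : forall u v, enorm (grad f u - grad f v) <= L * enorm (u - v).
Hypothesis mu0 : 0 < mu.
Hypothesis muL : mu < L.
Hypothesis SC : strongly_convex mu f.

Let L0 : 0 < L. Proof. exact: lt_trans mu0 muL. Qed.

Lemma conv1 a b :
  f a - mu / 2 * edot a a + (edot (grad f a) (b - a) - mu * edot a (b - a))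
  <= f b - mu / 2 * edot b b.
Proof.
set d := b - a.
set G0 := edot (grad f a) d; set ad := edot a d; set DD := edot d d.
have hDD : 0 <= DD by apply: edot_ge0.
apply: (@small_t R _ _ ((3 * L / 2 + mu / 2) * DD)).
  apply: mulr_ge0 => //; have h3 : 0 < 3 * L by apply: mulr_gt0 => //; exact: L0.
  by apply: addr_ge0; apply: ltW; apply: divr_gt0.
move=> t t0 t1.
have hc := SC b a (ltW t0) t1.
rewrite /= !enorm_sq in hc.
have ev : t *: b + (1 - t) *: a = a + t *: d.
  by vec_eq; ring.
rewrite ev in hc.
have hl := lower_line df HL L0 a d t0.
have ee : edot (a + t *: d) (a + t *: d) = edot a a + 2 * t * ad + t ^+ 2 * DD.
  rewrite !edotDl !edotDr !edotZl !edotZr (edotC d a) -/ad -/DD; ring.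
rewrite ee -/G0 -/DD in hc hl.
set F := f (a + t *: d) in hc hl.
have : t * ((G0 - mu * ad) - (3 * L / 2 + mu / 2) * DD * t - (f b - mu / 2 * edot b b - (f a - mu / 2 * edot a a))) <= 0.
  lra.
rewrite pmulr_rle0 //; lra.
Qed.


Lemma interp a b :
  f b + edot (grad f b) (a - b) + mu / 2 * edot (a - b) (a - b)
  + (2 * (L - mu))^-1 * edot (grad f a - grad f b - mu *: (a - b))
                             (grad f a - grad f b - mu *: (a - b)) <= f a.
Proof.
have M0 : L - mu != 0 by rewrite subr_eq0 gt_eqF.
set ga := grad f a; set gb := grad f b.
set M := L - mu in M0 *.
set z := a - M^-1 *: (ga - gb - mu *: (a - b)).
have H1 := conv1 b z.
have H2 := descent df HL L0 a z.
have Eab : a - b = lc4 1 (-1) 0 0 a b ga gb by vec_eq; ring.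
have Ee : ga - gb - mu *: (a - b) = lc4 (- mu) mu 1 (-1) a b ga gb by vec_eq; ring.
have Ezb : z - b = lc4 (1 + mu / M) (-1 - mu / M) (- M^-1) (M^-1) a b ga gb.
  by vec_eq; field.
have Eza : z - a = lc4 (mu / M) (- mu / M) (- M^-1) (M^-1) a b ga gb.
  by vec_eq; field.
have Ez : z = lc4 (1 + mu / M) (- mu / M) (- M^-1) (M^-1) a b ga gb.
  by vec_eq; field.
have Ea : a = lc4 1 0 0 0 a b ga gb by vec_eq; ring.
have Eb : b = lc4 0 1 0 0 a b ga gb by vec_eq; ring.
have Ega : ga = lc4 0 0 1 0 a b ga gb by vec_eq; ring.
have Egb : gb = lc4 0 0 0 1 a b ga gb by vec_eq; ring.
rewrite (edot_lc4E Egb Ezb) (edot_lc4E Eb Ezb) (edot_lc4E Ez Ez) in H1.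
rewrite (edot_lc4E Ega Eza) (edot_lc4E Eza Eza) in H2.
rewrite (edot_lc4E Egb Eab) (edot_lc4E Eab Eab) (edot_lc4E Ee Ee).
rewrite -subr_ge0 in H1; rewrite -subr_ge0 in H2.
apply: (le_by (addr_ge0 H1 H2)).
rewrite /M; field.
by rewrite -/M.
Qed.

End Interp.

Lemma pos_add_l (R : realType) (x y : R) : 0 < x -> 0 <= y -> 0 < x + y.
Proof. by move=> hx hy; apply: (lt_le_trans hx); rewrite lerDl. Qed.
Lemma pos_sub_l (R : realType) (x y : R) : 0 < x -> 0 <= y -> 0 < x + y.
Proof. exact: pos_add_l. Qed.

Ltac pos_tac := repeat match goal with
 | |- is_true (0 <= _ + _) => apply: addr_ge0
 | |- is_true (0 <= _ * _) => apply: mulr_ge0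
 | |- is_true (0 <= _ ^+ _) => apply: exprn_ge0
 | |- is_true (0 <= _%:R) => apply: ler0n
 | |- is_true (0 <= 1) => apply: ler01
 | |- is_true (0 <= _^-1) => rewrite invr_ge0
 | |- is_true (0 <= _) => apply: ltW; assumption
 | |- is_true (0 <= _) => assumption
 end.
Ltac spos_tac := repeat match goal with
 | |- is_true (0 < _ + _) => apply: pos_add_l
 | |- is_true (0 < _ * _) => apply: mulr_gt0
 | |- is_true (0 < _ ^+ _) => apply: exprn_gt0
 | |- is_true (0 < _%:R) => rewrite ltr0n //
 | |- is_true (0 < 1) => apply: ltr01
 | |- is_true (0 <= 1) => apply: ler01
 | |- is_true (0 < _^-1) => rewrite invr_gt0
 | |- is_true (0 <= _) => pos_tac
 | |- is_true (0 < _) => assumption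
 end.
Ltac nz_tac := apply/lt0r_neq0; spos_tac; done.
Lemma nz3 (R : realType) (mu gm : R) : 0 < mu -> 0 < gm -> mu * (gm + 1) * (gm + 2) + - mu * gm ^+ 2 != 0.
Proof.
move=> h1 h2; have -> : mu * (gm + 1) * (gm + 2) + - mu * gm ^+ 2 = mu * (3 * gm + 2) by ring.
by apply/lt0r_neq0; apply: mulr_gt0 => //; lra.
Qed.
Ltac fside := repeat (apply/andP; split); try assumption; try nz_tac; try (apply: nz3; assumption).

Section Main.
Variables (R : realType) (n : nat) (f : 'rV[R]_n -> R) (L mu gm : R) (xs : 'rV[R]_n).
Hypothesis df : forall z, differentiable f z.
Hypothesis HL : forall u v, enorm (grad f u - grad f v) <= L * enorm (u - v).
Hypothesis mu0 : 0 < mu.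
Hypothesis muL : mu < L.
Hypothesis SC : strongly_convex mu f.
Hypothesis hmin : forall z, f xs <= f z.
Hypothesis gm0 : 0 < gm.
Hypothesis hLg : L = mu * (gm + 1) * (gm + 2) / gm ^+ 2.


Lemma gxs0 : grad f xs = 0.
Proof.
have L0 : 0 < L := lt_trans mu0 muL.
apply: edot0.
have h := descent df HL L0 xs (xs - L^-1 *: grad f xs).
have := hmin (xs - L^-1 *: grad f xs).
have e : xs - L^-1 *: grad f xs - xs = - (L^-1 *: grad f xs) by rewrite addrAC subrr add0r.
rewrite e !edotNl !edotNr !edotZl !edotZr opprK in h.
have hL := L0; have hg := edot_ge0 (grad f xs).
move: h; set G := edot (grad f xs) (grad f xs) => h1 h2.
have : 0 <= - (L^-1 * G) + L / 2 * (L^-1 * (L^-1 * G)) by lra.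
have -> : - (L^-1 * G) + L / 2 * (L^-1 * (L^-1 * G)) = - (G / (2 * L)).
  by field; rewrite gt_eqF.
rewrite oppr_ge0 => h3; apply/eqP; rewrite eq_le hg andbT.
by rewrite pmulr_lle0 // in h3; rewrite invr_gt0 mulr_gt0.
Qed.

Definition zv (xk yk : 'rV[R]_n) := (1 + gm^-1) *: (xk - xs) - gm^-1 *: (yk - xs)
   - (gm / (mu * (1 + gm))) *: grad f xk.
Definition Phi (xk yk : 'rV[R]_n) := f xk - f xs + mu / 2 * edot (zv xk yk) (zv xk yk)
   - (2 * L)^-1 * edot (grad f xk) (grad f xk).


Lemma step xk yk y1 x1 : y1 = xk - L^-1 *: grad f xk ->
  x1 = y1 + (2 * gm + 1)^-1 *: (y1 - yk) + (2 * gm + 1)^-1 *: (y1 - xk) ->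
  Phi x1 y1 <= (1 + gm)^-1 * Phi xk yk.
Proof.
move=> hy hx.
have Q1 := interp df HL mu0 muL SC xk x1.
have Q2 := interp df HL mu0 muL SC xs x1.
rewrite gxs0 in Q2.
rewrite /Phi /zv.
have L0' : 0 < L := lt_trans mu0 muL.
have hB : 2 * gm + 1 != 0 by nz_tac.
have hL : L != 0 by rewrite gt_eqF.
set w := xk - xs in Q1 Q2 *; set v := yk - xs in Q1 Q2 *.
set g0 := grad f xk in Q1 Q2 hy *; set g1 := grad f x1 in Q1 Q2 *.
clearbody g0 g1.
have E1 : xk - x1 = lc4 (- (2 * gm + 1)^-1) (2 * gm + 1)^-1 ((1 + 2 * (2 * gm + 1)^-1) / L) 0 w v g0 g1.
  by rewrite hx hy /w /v; vec_eq; field; fside.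
have E2 : g0 - g1 - mu *: (xk - x1) = lc4 (mu * (2 * gm + 1)^-1) (- mu * (2 * gm + 1)^-1) (1 - mu * (1 + 2 * (2 * gm + 1)^-1) / L) (-1) w v g0 g1.
  by rewrite hx hy /w /v; vec_eq; field; fside.
have E3 : xs - x1 = lc4 (- (1 + (2 * gm + 1)^-1)) (2 * gm + 1)^-1 ((1 + 2 * (2 * gm + 1)^-1) / L) 0 w v g0 g1.
  by rewrite hx hy /w /v; vec_eq; field; fside.
have E4 : 0 - g1 - mu *: (xs - x1) = lc4 (mu * (1 + (2 * gm + 1)^-1)) (- mu * (2 * gm + 1)^-1) (- mu * (1 + 2 * (2 * gm + 1)^-1) / L) (-1) w v g0 g1.
  by rewrite hx hy /w /v; vec_eq; field; fside.
have Eg1 : g1 = lc4 0 0 0 1 w v g0 g1 by vec_eq; ring.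
have Ez0 : (1 + gm^-1) *: w - gm^-1 *: v - (gm / (mu * (1 + gm))) *: g0 = lc4 (1 + gm^-1) (- gm^-1) (- (gm / (mu * (1 + gm)))) 0 w v g0 g1.
  by vec_eq; ring.
have Ez1 : (1 + gm^-1) *: (x1 - xs) - gm^-1 *: (y1 - xs) - (gm / (mu * (1 + gm))) *: g1 =
   lc4 ((1 + gm^-1) * (1 + (2 * gm + 1)^-1) - gm^-1) (- (1 + gm^-1) * (2 * gm + 1)^-1) (- (1 + gm^-1) * (1 + 2 * (2 * gm + 1)^-1) / L + gm^-1 / L) (- (gm / (mu * (1 + gm)))) w v g0 g1.
  by rewrite hx hy /w /v; vec_eq; field; fside.
rewrite (edot_lc4E Eg1 E1) (edot_lc4E E1 E1) (edot_lc4E E2 E2) in Q1.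
rewrite (edot_lc4E Eg1 E3) (edot_lc4E E3 E3) (edot_lc4E E4 E4) in Q2.
rewrite (edot_lc4E Ez0 Ez0) (edot_lc4E Ez1 Ez1).
have S0 := edot_ge0 (lc4 (((1%:R) / (1%:R))) (((- (1%:R / 2%:R) - (5%:R / 4%:R) * gm ^+ 1 - (1%:R / 4%:R) * gm ^+ 2 - (1%:R / 2%:R) * gm ^+ 4) / ((1%:R / 2%:R) + (5%:R / 4%:R) * gm ^+ 1 + (1%:R / 4%:R) * gm ^+ 2 + 1%:R * gm ^+ 4 + 1%:R * gm ^+ 5))) (((- 1%:R * gm ^+ 2 - (5%:R / 2%:R) * gm ^+ 3 - (1%:R / 2%:R) * gm ^+ 4 - (3%:R / 2%:R) * gm ^+ 6 - 1%:R * gm ^+ 7) / (1%:R + 4%:R * gm ^+ 1 + (19%:R / 4%:R) * gm ^+ 2 + 2%:R * gm ^+ 3 + (9%:R / 4%:R) * gm ^+ 4 + 5%:R * gm ^+ 5 + 4%:R * gm ^+ 6 + 1%:R * gm ^+ 7)) / mu) (((- (1%:R / 4%:R) * gm ^+ 3 - 1%:R * gm ^+ 4 - (3%:R / 2%:R) * gm ^+ 5 - 1%:R * gm ^+ 6) / ((1%:R / 2%:R) + (7%:R / 4%:R) * gm ^+ 1 + (3%:R / 2%:R) * gm ^+ 2 + (1%:R / 4%:R) * gm ^+ 3 + 1%:R * gm ^+ 4 + 2%:R * gm ^+ 5 + 1%:R * gm ^+ 6)) / mu) w v g0 g1).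
rewrite edot_lc4 in S0.
have P0 : 0 <= mu * (((1%:R / 12%:R) + (5%:R / 24%:R) * gm ^+ 1 + (1%:R / 24%:R) * gm ^+ 2 + (1%:R / 6%:R) * gm ^+ 4 + (1%:R / 6%:R) * gm ^+ 5) / ((1%:R / 6%:R) * gm ^+ 1 + (11%:R / 12%:R) * gm ^+ 2 + (5%:R / 3%:R) * gm ^+ 3 + 1%:R * gm ^+ 4)) by pos_tac.
have S1 := edot_ge0 (lc4 (0) (((1%:R) / (1%:R))) (((1%:R * gm ^+ 2) / (2%:R + 3%:R * gm ^+ 1 + 1%:R * gm ^+ 2)) / mu) (((- 2%:R - 5%:R * gm ^+ 1 - 1%:R * gm ^+ 2 + 2%:R * gm ^+ 3) / (2%:R + 5%:R * gm ^+ 1 + 1%:R * gm ^+ 2)) / mu) w v g0 g1).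
rewrite edot_lc4 in S1.
have P1 : 0 <= mu * (((1%:R / 12%:R) * gm ^+ 3 + (5%:R / 24%:R) * gm ^+ 4 + (1%:R / 24%:R) * gm ^+ 5) / ((1%:R / 3%:R) + (5%:R / 3%:R) * gm ^+ 1 + (11%:R / 4%:R) * gm ^+ 2 + (5%:R / 3%:R) * gm ^+ 3 + (11%:R / 12%:R) * gm ^+ 4 + (7%:R / 3%:R) * gm ^+ 5 + (8%:R / 3%:R) * gm ^+ 6 + 1%:R * gm ^+ 7)) by pos_tac.
have S2 := edot_ge0 (lc4 (0) (0) (0 / mu) (((1%:R) / (1%:R)) / mu) w v g0 g1).
rewrite edot_lc4 in S2.
have P2 : 0 <= mu * (((1%:R / 2%:R) * gm ^+ 4) / (4%:R + 20%:R * gm ^+ 1 + 35%:R * gm ^+ 2 + 27%:R * gm ^+ 3 + 9%:R * gm ^+ 4 + 1%:R * gm ^+ 5)) by pos_tac.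
rewrite -subr_ge0 in Q1; rewrite -subr_ge0 in Q2.
have W1 : 0 <= (1 + gm)^-1 by pos_tac.
have W2 : 0 <= 1 - (1 + gm)^-1.
  by rewrite subr_ge0 invf_le1; [rewrite lerDl; pos_tac | spos_tac].
apply: (le_by (addr_ge0 (addr_ge0 (mulr_ge0 W1 Q1) (mulr_ge0 W2 Q2))
   (addr_ge0 (addr_ge0 (mulr_ge0 P0 S0) (mulr_ge0 P1 S1)) (mulr_ge0 P2 S2)))).
rewrite hLg; field.
fside.
Qed.

Lemma fin xk yk y1 x1 : y1 = xk - L^-1 *: grad f xk ->
  x1 = y1 + (2 * gm + 1)^-1 *: (y1 - yk) + (2 * gm + 1)^-1 *: (y1 - xk) ->
  f x1 - f xs <= 2 * Phi xk yk.
Proof.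
move=> hy hx.
have Q1 := interp df HL mu0 muL SC xk x1.
have Q2 := interp df HL mu0 muL SC xs x1.
have Q3 := interp df HL mu0 muL SC xk xs.
rewrite gxs0 in Q2 Q3.
rewrite /Phi /zv.
have L0' : 0 < L := lt_trans mu0 muL.
have hB : 2 * gm + 1 != 0 by nz_tac.
have hL : L != 0 by rewrite gt_eqF.
set w := xk - xs in Q1 Q2 Q3 *; set v := yk - xs in Q1 Q2 Q3 *.
set g0 := grad f xk in Q1 Q2 Q3 hy *; set g1 := grad f x1 in Q1 Q2 Q3 *.
clearbody g0 g1.
have E1 : xk - x1 = lc4 (- (2 * gm + 1)^-1) (2 * gm + 1)^-1 ((1 + 2 * (2 * gm + 1)^-1) / L) 0 w v g0 g1.
  by rewrite hx hy /w /v; vec_eq; field; fside.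
have E2 : g0 - g1 - mu *: (xk - x1) = lc4 (mu * (2 * gm + 1)^-1) (- mu * (2 * gm + 1)^-1) (1 - mu * (1 + 2 * (2 * gm + 1)^-1) / L) (-1) w v g0 g1.
  by rewrite hx hy /w /v; vec_eq; field; fside.
have E3 : xs - x1 = lc4 (- (1 + (2 * gm + 1)^-1)) (2 * gm + 1)^-1 ((1 + 2 * (2 * gm + 1)^-1) / L) 0 w v g0 g1.
  by rewrite hx hy /w /v; vec_eq; field; fside.
have E4 : 0 - g1 - mu *: (xs - x1) = lc4 (mu * (1 + (2 * gm + 1)^-1)) (- mu * (2 * gm + 1)^-1) (- mu * (1 + 2 * (2 * gm + 1)^-1) / L) (-1) w v g0 g1.
  by rewrite hx hy /w /v; vec_eq; field; fside.
have Eg1 : g1 = lc4 0 0 0 1 w v g0 g1 by vec_eq; ring.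
have E0 : (0 : 'rV[R]_n) = lc4 0 0 0 0 w v g0 g1 by vec_eq; ring.
have Ew : w = lc4 1 0 0 0 w v g0 g1 by vec_eq; ring.
have E5 : g0 - 0 - mu *: w = lc4 (- mu) 0 1 0 w v g0 g1 by vec_eq; ring.
have Ez0 : (1 + gm^-1) *: w - gm^-1 *: v - (gm / (mu * (1 + gm))) *: g0 = lc4 (1 + gm^-1) (- gm^-1) (- (gm / (mu * (1 + gm)))) 0 w v g0 g1.
  by vec_eq; ring.
rewrite (edot_lc4E Eg1 E1) (edot_lc4E E1 E1) (edot_lc4E E2 E2) in Q1.
rewrite (edot_lc4E Eg1 E3) (edot_lc4E E3 E3) (edot_lc4E E4 E4) in Q2.
rewrite (edot_lc4E E0 Ew) (edot_lc4E Ew Ew) (edot_lc4E E5 E5) in Q3.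
rewrite (edot_lc4E Ez0 Ez0).
have S0 := edot_ge0 (lc4 (((- 1%:R - (5%:R / 2%:R) * gm ^+ 1 - 3%:R * gm ^+ 2 - 1%:R * gm ^+ 3) / ((1%:R / 2%:R) * gm ^+ 2 + 1%:R * gm ^+ 3))) (((1%:R + (3%:R / 2%:R) * gm ^+ 1 + (1%:R / 2%:R) * gm ^+ 2) / ((1%:R / 2%:R) * gm ^+ 2 + 1%:R * gm ^+ 3))) (((1%:R + (3%:R / 2%:R) * gm ^+ 1 + 1%:R * gm ^+ 2) / ((1%:R / 2%:R) + (3%:R / 2%:R) * gm ^+ 1 + 1%:R * gm ^+ 2)) / mu) (((1%:R) / (1%:R)) / mu) w v g0 g1).
rewrite edot_lc4 in S0.
have P0 : 0 <= mu * (((1%:R / 6%:R) * gm ^+ 2) / ((2%:R / 3%:R) + 1%:R * gm ^+ 1)) by pos_tac.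
have S1 := edot_ge0 (lc4 (((- (5%:R / 7%:R) - (10%:R / 7%:R) * gm ^+ 1 - (6%:R / 7%:R) * gm ^+ 2) / ((5%:R / 7%:R) + 1%:R * gm ^+ 1))) (((1%:R) / (1%:R))) ((((5%:R / 7%:R) * gm ^+ 2 + (6%:R / 7%:R) * gm ^+ 3) / ((5%:R / 7%:R) + (12%:R / 7%:R) * gm ^+ 1 + 1%:R * gm ^+ 2)) / mu) (0 / mu) w v g0 g1).
rewrite edot_lc4 in S1.
have P1 : 0 <= mu * (((5%:R / 8%:R) + (7%:R / 8%:R) * gm ^+ 1) / ((1%:R / 4%:R) * gm ^+ 1 + 1%:R * gm ^+ 2 + 1%:R * gm ^+ 3)) by pos_tac.
have S2 := edot_ge0 (lc4 (((1%:R) / (1%:R))) (0) (((- 1%:R * gm ^+ 2) / (2%:R + 3%:R * gm ^+ 1 + 1%:R * gm ^+ 2)) / mu) (0 / mu) w v g0 g1).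
rewrite edot_lc4 in S2.
have P2 : 0 <= mu * (((5%:R / 21%:R) + (41%:R / 42%:R) * gm ^+ 1 + (23%:R / 21%:R) * gm ^+ 2 + (1%:R / 3%:R) * gm ^+ 3) / ((10%:R / 21%:R) + (29%:R / 21%:R) * gm ^+ 1 + 1%:R * gm ^+ 2)) by pos_tac.
rewrite -subr_ge0 in Q1; rewrite -subr_ge0 in Q2; rewrite -subr_ge0 in Q3.
have W1 : 0 <= (1 + gm)^-1 by pos_tac.
have W2 : 0 <= 1 - (1 + gm)^-1.
  by rewrite subr_ge0 invf_le1; [rewrite lerDl; pos_tac | spos_tac].
have W3 : 0 <= 2 - (1 + gm)^-1.
  rewrite subr_ge0; apply: (le_trans (y := 1)); last by rewrite ler1n.
  by rewrite invf_le1; [rewrite lerDl; pos_tac | spos_tac].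
apply: (le_by (addr_ge0 (addr_ge0 (addr_ge0 (mulr_ge0 W1 Q1) (mulr_ge0 W2 Q2)) (mulr_ge0 W3 Q3))
   (addr_ge0 (addr_ge0 (mulr_ge0 P0 S0) (mulr_ge0 P1 S1)) (mulr_ge0 P2 S2)))).
rewrite hLg; field.
fside.
Qed.

Lemma init x0 : 2 * Phi x0 x0 <= (1 + gm) / (2 * gm) * ((mu + 2 * L) / 2) * edot (x0 - xs) (x0 - xs).
Proof.
have Q4 := interp df HL mu0 muL SC xs x0.
have Q5 := interp df HL mu0 muL SC x0 xs.
rewrite gxs0 in Q4 Q5.
rewrite /Phi /zv.
have L0' : 0 < L := lt_trans mu0 muL.
have hL : L != 0 by rewrite gt_eqF.
set w := x0 - xs in Q4 Q5 *.
set g0 := grad f x0 in Q4 Q5 *.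
clearbody g0.
have E6 : xs - x0 = lc4 (-1) 0 0 0 w w g0 g0 by rewrite /w; vec_eq; ring.
have E7 : 0 - g0 - mu *: (xs - x0) = lc4 mu 0 (-1) 0 w w g0 g0 by rewrite /w; vec_eq; ring.
have Eg : g0 = lc4 0 0 1 0 w w g0 g0 by vec_eq; ring.
have E0 : (0 : 'rV[R]_n) = lc4 0 0 0 0 w w g0 g0 by vec_eq; ring.
have Ew : w = lc4 1 0 0 0 w w g0 g0 by vec_eq; ring.
have E8 : g0 - 0 - mu *: w = lc4 (- mu) 0 1 0 w w g0 g0 by vec_eq; ring.
have Ez : (1 + gm^-1) *: w - gm^-1 *: w - (gm / (mu * (1 + gm))) *: g0 = lc4 1 0 (- (gm / (mu * (1 + gm)))) 0 w w g0 g0.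
  by vec_eq; field; fside.
rewrite (edot_lc4E Eg E6) (edot_lc4E E6 E6) (edot_lc4E E7 E7) in Q4.
rewrite (edot_lc4E E0 Ew) (edot_lc4E Ew Ew) (edot_lc4E E8 E8) in Q5.
rewrite (edot_lc4E Ez Ez).
have S0 := edot_ge0 (lc4 (((1%:R) / (1%:R))) 0 (((- (3%:R / 2%:R) * gm ^+ 3 - (11%:R / 4%:R) * gm ^+ 4 - (7%:R / 4%:R) * gm ^+ 5 - 1%:R * gm ^+ 6) / (1%:R + 5%:R * gm ^+ 1 + 10%:R * gm ^+ 2 + (89%:R / 8%:R) * gm ^+ 3 + (31%:R / 4%:R) * gm ^+ 4 + (29%:R / 8%:R) * gm ^+ 5 + 1%:R * gm ^+ 6)) / mu) 0 w w g0 g0).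
rewrite edot_lc4 in S0.
have P0 : 0 <= mu * (((2%:R / 3%:R) + (8%:R / 3%:R) * gm ^+ 1 + 4%:R * gm ^+ 2 + (41%:R / 12%:R) * gm ^+ 3 + (7%:R / 4%:R) * gm ^+ 4 + (2%:R / 3%:R) * gm ^+ 5) / ((2%:R / 3%:R) * gm ^+ 3 + 1%:R * gm ^+ 4)) by pos_tac.
have S1 := edot_ge0 (lc4 (0) 0 (((1%:R) / (1%:R)) / mu) 0 w w g0 g0).
rewrite edot_lc4 in S1.
have P1 : 0 <= mu * ((1%:R * gm ^+ 2 + (1%:R / 2%:R) * gm ^+ 3 + (5%:R / 2%:R) * gm ^+ 4 + (9%:R / 4%:R) * gm ^+ 5 + (9%:R / 8%:R) * gm ^+ 6 + (3%:R / 4%:R) * gm ^+ 7) / (2%:R + 11%:R * gm ^+ 1 + 25%:R * gm ^+ 2 + (129%:R / 4%:R) * gm ^+ 3 + (213%:R / 8%:R) * gm ^+ 4 + 15%:R * gm ^+ 5 + (45%:R / 8%:R) * gm ^+ 6 + 1%:R * gm ^+ 7)) by pos_tac.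
rewrite -subr_ge0 in Q4; rewrite -subr_ge0 in Q5.
have W4 : 0 <= 3 :> R by [].
have W5 : 0 <= 1 :> R by [].
apply: (le_by (addr_ge0 (addr_ge0 (mulr_ge0 W4 Q4) (mulr_ge0 W5 Q5))
   (addr_ge0 (mulr_ge0 P0 S0) (mulr_ge0 P1 S1)))).
rewrite hLg; field.
fside.
Qed.

End Main.

Unset Implicit Arguments. Set Strict Implicit.

Theorem theorem4 (R : realType) (n : nat) (f : 'rV[R]_n -> R) (mu L : R)
  (xs : 'rV[R]_n) (x y : nat -> 'rV[R]_n) :
  (forall z, differentiable f z) ->
  strongly_convex mu f ->
  (forall u v, enorm (grad f u - grad f v) <= L * enorm (u - v)) ->
  0 < mu -> mu < L ->
  (forall z, f xs <= f z) ->
  let kappa := L / mu in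
  let gamma := (Num.sqrt (8 * kappa + 1) + 3) / (2 * kappa - 2) in
  y 0%N = x 0%N ->
  (forall k, y k.+1 = x k - L^-1 *: grad f (x k)) ->
  (forall k, x k.+1 = y k.+1 + (2 * gamma + 1)^-1 *: (y k.+1 - y k)
                             + (2 * gamma + 1)^-1 *: (y k.+1 - x k)) ->
  forall k : nat, (1 <= k)%N ->
    f (x k) - f xs <=
      (1 + gamma) ^ (2%:Z - k%:Z) / (2 * gamma)
      * ((mu + 2 * L) / 2) * enorm (x 0%N - xs) ^+ 2.
Proof.
move=> df SC HL mu0 muL hmin kappa gamma hy0 hy hx k hk.
have k1 : 1 < kappa by rewrite /kappa ltr_pdivlMr // mul1r.
have hL : L = mu * kappa by rewrite /kappa mulrC divfK // gt_eqF.
clearbody kappa.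
set s := Num.sqrt (8 * kappa + 1).
have s0 : 0 <= s by apply: sqrtr_ge0.
have hs : s ^+ 2 = 8 * kappa + 1 by rewrite /s sqr_sqrtr //; lra.
have gdef : gamma = (s + 3) / (2 * kappa - 2) by [].
clearbody gamma s.
have gm0 : 0 < gamma by rewrite gdef; apply: divr_gt0; lra.
have hk1 : 2 * kappa - 2 != 0 by apply/lt0r_neq0; lra.
have hq : (kappa - 1) * gamma ^+ 2 - (3 * gamma + 2) = (s ^+ 2 - 8 * kappa - 1) / (4 * (kappa - 1)).
  rewrite gdef; field.
  by apply/andP; split; apply/lt0r_neq0; lra.
have hq0 : (kappa - 1) * gamma ^+ 2 - (3 * gamma + 2) = 0.
  by rewrite hq hs (_ : 8 * kappa + 1 - 8 * kappa - 1 = 0) ?mul0r //; ring.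
clear hq.
have hLg : L = mu * (gamma + 1) * (gamma + 2) / gamma ^+ 2.
  apply: (mulIf (x := gamma ^+ 2)); first by rewrite expf_neq0 // gt_eqF.
  rewrite divfK; last by rewrite expf_neq0 // gt_eqF.
  rewrite hL; move: hq0; nra.
have St := step df HL mu0 muL SC hmin gm0 hLg.
have Fi := fin df HL mu0 muL SC hmin gm0 hLg.
have In := init df HL mu0 muL SC hmin gm0 hLg (x 0%N).
set P := Phi f L mu gamma xs.
have rho0 : 0 <= (1 + gamma)^-1 by rewrite invr_ge0; lra.
have Hind : forall m, P (x m) (y m) <= (1 + gamma)^-1 ^+ m * P (x 0%N) (y 0%N).
  elim=> [|m IH]; first by rewrite expr0 mul1r.
  apply: (le_trans (St _ _ _ _ (hy m) (hx m))).
  by rewrite exprS -mulrA ler_wpM2l.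
case: k hk => [//|m] _.
apply: (le_trans (Fi _ _ _ _ (hy m) (hx m))).
apply: (le_trans (y := 2 * ((1 + gamma)^-1 ^+ m * P (x 0%N) (y 0%N)))).
  by rewrite ler_wpM2l // Hind.
rewrite hy0 mulrCA.
have e : (1 + gamma) ^ (2%:Z - m.+1%:Z) = (1 + gamma) * (1 + gamma)^-1 ^+ m.
  have -> : (2%:Z - m.+1%:Z) = 1 + (- m%:Z) by rewrite -addn1 PoszD; ring.
  rewrite exprzDr; last by rewrite unitfE; apply/lt0r_neq0; lra.
  by rewrite expr1z -exprnN exprVn.
rewrite e enorm_sq.
apply: (le_trans (y := (1 + gamma)^-1 ^+ m * (2 * P (x 0%N) (x 0%N)))).
  by apply: le_of_eq; ring.
apply: (le_trans (ler_wpM2l (exprn_ge0 m rho0) In)).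
by apply: le_of_eq; rewrite /P; ring.
Qed.
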